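(* Suppose a learning dynamic is lossless. Then it guarantees constant regret if and only if it is finitely lossless.
   Context: $\Delta^n=\{\mathbf{x}\in\mathbb{R}^n: x_j\ge 0,\ \sum_j x_j=1\}$; $\mathbf{e}_j$ is the $j$-th standard basis vector. A learning dynamic over $n$ actions is specified by a conversion function $f:\mathbb{R}^n\to\Delta^n$: given an initial state $\mathbf{q}^0\in\mathbb{R}^n$ and an input function $\mathbf{p}:[0,\infty)\to\mathbb{R}^n$ square integrable on bounded intervals, the state is $\mathbf{q}(t)=\mathbf{q}^0+\int_0^t\mathbf{p}(\tau)\,d\tau$ and the strategy is $\mathbf{x}(t)=f(\mathbf{q}(t))$. The learning operator with shift $\mathbf{x}^*\in\mathbb{R}^n$ has state $\mathbf{q}$, input $\mathbf{p}$, output $\mathbf{x}-\mathbf{x}^*$; it is lossless via a storage function $L:\mathbb{R}^n\to\mathbb{R}$ if for every $\mathbf{q}^0$, every $\mathbf{p}$ and every $t\ge0$, $L(\mathbf{q}(t))=L(\mathbf{q}^0)+\int_0^t\langle\mathbf{p}(\tau),\mathbf{x}(\tau)-\mathbf{x}^*\rangle\,d\tau$, and finitely lossless if it is lossless via a storage function bounded from below. A learning dynamic is lossless if its learning operator with any shift is lossless (via some storage function); it is finitely lossless if for every action $j$ its learning operator with shift $\mathbf{e}_j$ is finitely lossless. The regret at time $T>0$ is $\max_j\int_0^T p_j(\tau)\,d\tau-\int_0^T\langle\mathbf{p}(\tau),\mathbf{x}(\tau)\rangle\,d\tau$; the dynamic guarantees constant regret if for every $\mathbf{p}$ and $T>0$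 the regret at time $T$ is bounded above by a constant depending only on $\mathbf{q}^0$. *)

(* Defs.v *)
From HB Require Import structures.
From mathcomp Require Import all_boot all_order all_algebra.
From mathcomp Require Import all_classical all_reals all_analysis.
Set Implicit Arguments. Unset Strict Implicit. Unset Printing Implicit Defensive.
Import Order.TTheory GRing.Theory Num.Theory.
Local Open Scope classical_set_scope.
Local Open Scope ring_scope.

Section Learning.
Variables (R : realType) (n : nat).

Definition vec := 'I_n -> R.

Definition lmu := (@lebesgue_measure R).

Definition in_simplex (x : vec) : Prop :=
  (forall j, 0 <= x j) /\ \sum_(j < n) x j = 1.

Definition basis_vec (j : 'I_n) : vec := fun i => if i == j then 1 else 0.

Definition dotv (x y : vec) : R := \sum_(j < n) x j * y j.

Definition sq_int_bounded (p : R -> vec) : Prop :=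
  forall j : 'I_n, forall T : R, 0 <= T ->
    measurable_fun `[0, T] (fun t => p t j) /\
    lmu.-integrable `[0, T] (fun t => ((p t j) ^+ 2)%:E).

Definition state (q0 : vec) (p : R -> vec) (t : R) : vec :=
  fun j => q0 j + Rintegral lmu `[0, t] (fun tau => p tau j).

Definition lossless_via (f : vec -> vec) (xs : vec) (L : vec -> R) : Prop :=
  forall (q0 : vec) (p : R -> vec), sq_int_bounded p ->
  forall t : R, 0 <= t ->
    L (state q0 p t) =
    L q0 + Rintegral lmu `[0, t]
             (fun tau => dotv (p tau) (fun j => f (state q0 p tau) j - xs j)).

Definition operator_lossless (f : vec -> vec) (xs : vec) : Prop :=
  exists L : vec -> R, lossless_via f xs L.

Definition operator_finitely_lossless (f : vec -> vec) (xs : vec) : Prop :=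
  exists L : vec -> R, (exists c : R, forall q, c <= L q) /\ lossless_via f xs L.

Definition lossless_dynamic (f : vec -> vec) : Prop :=
  forall xs : vec, operator_lossless f xs.

Definition finitely_lossless_dynamic (f : vec -> vec) : Prop :=
  forall j : 'I_n, operator_finitely_lossless f (basis_vec j).

Definition regret_j (f : vec -> vec) (q0 : vec) (p : R -> vec) (T : R) (j : 'I_n) : R :=
  Rintegral lmu `[0, T] (fun tau => p tau j)
  - Rintegral lmu `[0, T] (fun tau => dotv (p tau) (f (state q0 p tau))).

(* max_j regret_j <= C  is written as  forall j, regret_j <= C *)
Definition constant_regret (f : vec -> vec) : Prop :=
  forall q0 : vec, exists C : R,
    forall p : R -> vec, sq_int_bounded p ->
    forall T : R, 0 < T -> forall j : 'I_n, regret_j f q0 p T j <= C.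

End Learning.

(* Main.v *)
Require Import Defs.
From mathcomp Require Import all_boot all_order all_algebra.
From mathcomp Require Import all_classical all_reals all_analysis.
From mathcomp Require Import measurable_realfun.
From mathcomp Require Import ring lra.
Set Implicit Arguments. Unset Strict Implicit. Unset Printing Implicit Defensive.
Import Order.TTheory GRing.Theory Num.Theory.
Local Open Scope classical_set_scope.
Local Open Scope ring_scope.

Section G.
Context d (T : measurableType d) (R : realType) (mu : {measure set T -> \bar R}).
Local Open Scope ereal_scope.
Import HBNNSimple.

Lemma le_any (phi u : T -> \bar R) : (forall x, 0 <= phi x) ->
  (forall x, phi x <= u x) -> \int[mu]_x phi x <= \int[mu]_x u x.
Proof.
move=> p0 pu.
have u0 x : 0 <= u x by exact: le_trans (p0 x) (pu x).
rewrite !ge0_integralTE//.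
apply: ge_ereal_sup => _ [h hphi <-]; apply: ereal_sup_ubound; exists h => //.
by move=> x; exact: le_trans (hphi x) (pu x).
Qed.

Lemma add_indic (u : T -> R) (A : set T) : measurable A ->
  (forall x, (0 <= u x)%R) -> mu A \is a fin_num ->
  \int[mu]_x ((u x + \1_A x)%:E) = \int[mu]_x (u x)%:E + mu A.
Proof.
move=> mA u0 fA.
have mI : measurable_fun setT (fun x => (\1_A x : R)%:E).
  by apply/measurable_EFinP; exact: measurable_indic.
have intI : \int[mu]_x (\1_A x)%:E = mu A by rewrite integral_indic// setIT.
apply/eqP; rewrite eq_le; apply/andP; split.
- rewrite [X in X <= _]ge0_integralTE; last by move=> x; rewrite lee_fin addr_ge0.
  apply: ge_ereal_sup => _ [g hg <-].
  rewrite -integralT_nnsfun.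
  pose g' x := Num.max (g x - \1_A x)%R 0%R.
  have mg' : measurable_fun setT (fun x => (g' x)%:E).
    apply/measurable_EFinP; apply: measurable_maxr => //.
    apply: measurable_funB => //; exact: measurable_indic.
  apply: (@le_trans _ _ (\int[mu]_x ((g' x)%:E + (\1_A x)%:E))).
    apply: le_any => x; first by rewrite lee_fin.
    by rewrite -EFinD lee_fin -lerBlDr /g' le_max lexx.
  rewrite ge0_integralD//. all: try (by move=> x _; rewrite lee_fin /g' le_max lexx orbT). all: try (by move=> x _; rewrite lee_fin). 
  rewrite intI leeD2r// le_any// => x; first by rewrite lee_fin /g' le_max lexx orbT.
  rewrite lee_fin /g' ge_max u0 andbT lerBlDr.
  have := hg x; rewrite lee_fin => /le_trans; apply.
  by rewrite addrC.
- rewrite (@ge0_integralTE _ _ _ mu (fun x => (u x)%:E)); last by move=> x; rewrite lee_fin.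
  rewrite -leeBrDr//.
  apply: ge_ereal_sup => _ [g hg <-].
  rewrite leeBrDr//.
  rewrite -integralT_nnsfun -intI -ge0_integralD//; last 2 first.
    by move=> x _; rewrite lee_fin.
    by apply/measurable_EFinP; exact: measurable_funPT.
  apply: le_any => x; first by rewrite adde_ge0// lee_fin.
  by rewrite -EFinD lee_fin lerD2r -lee_fin hg.
Qed.
End G.

Section Gen.
Context d (T : measurableType d) (R : realType) (mu : {measure set T -> \bar R}).

Lemma RintC_gen (D : set T) (h : T -> R) (t : R) : measurable D -> mu D = t%:E ->
  (forall x, 0 <= h x <= 1) ->
  Rintegral mu D (fun x => h x + 1) = Rintegral mu D h + t.
Proof.
move=> mD muD h01.
rewrite /Rintegral (integral_mkcond D (fun x => (h x + 1)%:E)) (integral_mkcond D (fun x => (h x)%:E)).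
pose hD := patch (fun=> 0%R) D h.
have hD01 x : 0 <= hD x <= 1.
  by rewrite /hD /patch; case: ifP => _ //; rewrite lexx ler01.
have E1 : ((fun x => (h x + 1)%:E) \_ D) = (fun x => (hD x + \1_D x)%:E).
  apply/funext => x; rewrite /hD /patch indicE; case: ifP => _ //=.
  by rewrite addr0.
have E2 : ((fun x => (h x)%:E) \_ D) = (fun x => (hD x)%:E).
  by apply/funext => x; rewrite /hD /patch; case: ifP => _ //=.
rewrite E1 E2 add_indic//; last 2 first.
  by move=> x; have /andP[] := hD01 x.
  by rewrite muD.
have fin : (\int[mu]_x (hD x)%:E)%E \is a fin_num.
  rewrite ge0_fin_numE; last first.
    by apply: integral_ge0 => x _; rewrite lee_fin; have /andP[] := hD01 x.
  apply: (@le_lt_trans _ _ (\int[mu]_x (\1_D x)%:E)%E).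
    apply: le_any => x; first by rewrite lee_fin; have /andP[] := hD01 x.
    rewrite lee_fin /hD /patch indicE; case: ifP => _ //=; rewrite ?mulr1n ?mulr0n //.
    by have /andP[] := h01 x.
  by rewrite integral_indic// setIT muD ltry.
by rewrite muD fineD.
Qed.

Lemma Rint_cst_gen (D : set T) (c t : R) : measurable D -> mu D = t%:E ->
  Rintegral mu D (fun _ => c) = c * t.
Proof. by move=> mD muD; rewrite Rintegral_cst// muD. Qed.

End Gen.

Section L.
Variables (R : realType) (n : nat).
Implicit Types (q v : vec R n).

Lemma muI (t : R) : 0 <= t -> @lmu R (`[0, t] : set R) = t%:E.
Proof.
move=> t0.
rewrite /lmu lebesgue_measure_itv/= lte_fin; case: ltP => tp; first by rewrite oppr0 adde0.
by have -> : t = 0 by apply/le_anti; rewrite tp t0.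
Qed.

Lemma RintC (h : R -> R) (t : R) : 0 <= t -> (forall x, 0 <= h x <= 1) ->
  Rintegral (@lmu R) `[0, t] (fun x => h x + 1) = Rintegral (@lmu R) `[0, t] h + t.
Proof.
move=> t0 h01; apply: RintC_gen => //; by [exact: measurable_itv | exact: muI].
Qed.

Lemma Rint_cst (c t : R) : 0 <= t ->
  Rintegral (@lmu R) `[0, t] (fun _ => c) = c * t.
Proof. move=> t0; apply: Rint_cst_gen => //; by [exact: measurable_itv | exact: muI]. Qed.

Lemma sq_cst (v : vec R n) : sq_int_bounded (fun _ : R => v).
Proof.
move=> j T T0; split; first exact: measurable_cst.
apply/integrableP; split.
  by apply/measurable_EFinP; exact: measurable_cst.
rewrite (_ : (fun x => `|((v j ^+ 2)%:E)|%E) = cst (`|v j ^+ 2|%:E)); last by apply/funext.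
rewrite (@integral_cst _ _ _ (@lmu R) _ (measurable_itv _)).
rewrite [X in (_ * X)%E](_ : _ = T%:E); last exact: muI.

by rewrite -EFinM ltry.
Qed.

Lemma state_cst (q v : vec R n) (t : R) : 0 <= t ->
  state q (fun _ => v) t = (fun i => q i + t * v i).
Proof. by move=> t0; apply/funext => i; rewrite /state Rint_cst// mulrC. Qed.

Lemma seg f xs L : lossless_via f xs L -> forall (q v : vec R n) (t : R), 0 <= t ->
  L (fun i => q i + t * v i) = L q + Rintegral (@lmu R) `[0, t]
     (fun tau => dotv v (fun j => f (state q (fun _ => v) tau) j - xs j)).
Proof. by move=> hL q v t t0; rewrite -(state_cst q v t0); exact: hL (sq_cst v) t t0. Qed.

Lemma dot_basis (k : 'I_n) (w : vec R n) : dotv (basis_vec R k) w = w k.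
Proof.
rewrite /dotv (bigD1 k)//= /basis_vec eqxx mul1r big1 ?addr0// => i /negPf ->.
by rewrite mul0r.
Qed.

Lemma dot_basis_r (k : 'I_n) (w : vec R n) : dotv w (basis_vec R k) = w k.
Proof.
rewrite /dotv (bigD1 k)//= /basis_vec eqxx mulr1 big1 ?addr0// => i /negPf ->.
by rewrite mulr0.
Qed.

Lemma dot_subr (v w x : vec R n) : dotv v (fun i => w i - x i) = dotv v w - dotv v x.
Proof. by rewrite /dotv -sumrB; apply: eq_bigr => i _; rewrite mulrBr. Qed.

Lemma dot_0r (v : vec R n) : dotv v (fun _ => 0) = 0.
Proof. by rewrite /dotv big1// => i _; rewrite mulr0. Qed.

Lemma dot_p3 (j k : 'I_n) (w : vec R n) :
  dotv (fun i => - (basis_vec R j i + basis_vec R k i)) w = - (w j + w k).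
Proof.
rewrite -(dot_basis j w) -(dot_basis k w) /dotv -big_split -sumrN /=.
by apply: eq_bigr => i _; rewrite mulNr mulrDl.
Qed.

Lemma simplex2 (x : vec R n) (j k : 'I_n) : in_simplex x -> k != j ->
  [/\ 0 <= x j, 0 <= x k & x j + x k <= 1].
Proof.
case=> x0 xs kj; split => //.
rewrite -xs (bigD1 j)//= (bigD1 k)//= addrA lerDl.
by apply: sumr_ge0 => i _.
Qed.

Lemma simplex1 (x : vec R n) (j : 'I_n) : in_simplex x -> (forall k : 'I_n, k = j) ->
  x j = 1.
Proof.
case=> x0 xs none; rewrite -xs (bigD1 j)//= big1 ?addr0// => i /eqP[].
exact: none.
Qed.

End L.

Section Main.
Variables (R : realType) (n : nat) (f : vec R n -> vec R n).
Hypothesis hf : forall q, in_simplex (f q).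
Hypothesis hL : lossless_dynamic f.

Lemma FL (j : 'I_n) (Lj L0 : vec R n -> R) :
  lossless_via f (basis_vec R j) Lj -> lossless_via f (fun _ => 0) L0 ->
  forall (q : vec R n) (t : R), 0 <= t ->
  Lj (fun i => q i + t * basis_vec R j i) - L0 (fun i => q i + t * basis_vec R j i)
    + (q j + t * basis_vec R j j) = Lj q - L0 q + q j.
Proof.
move=> hj h0 q t t0.
have ejj : basis_vec R j j = 1 by rewrite /basis_vec eqxx.
rewrite (seg hj q (basis_vec R j) t0) (seg h0 q (basis_vec R j) t0) ejj.
case: (pselect (exists k : 'I_n, k != j)) => [[k kj]|none]; last first.
  have all1 : forall k : 'I_n, k = j.
    move=> k; apply/eqP; apply/negPn/negP => kj; apply: none; by exists k.
  rewrite (_ : (fun tau => _) = (fun _ => 0)); last first.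
    by apply/funext => tau; rewrite dot_basis ejj (simplex1 (hf _) all1) subrr.
  rewrite (_ : (fun tau => _) = (fun _ => 1)); last first.
    by apply/funext => tau; rewrite dot_basis subr0 (simplex1 (hf _) all1).
  rewrite !Rint_cst//; lra.
have jk : (j == k) = false by apply/negbTE; rewrite eq_sym.
have kjf : (k == j) = false by apply/negbTE.
have ekk : basis_vec R k k = 1 by rewrite /basis_vec eqxx.
have ekj : basis_vec R k j = 0 by rewrite /basis_vec jk.
have ejk : basis_vec R j k = 0 by rewrite /basis_vec kjf.
pose x : vec R n := fun i => basis_vec R j i + basis_vec R k i.
pose y : vec R n := basis_vec R k.
have [Lx hx] := hL x.
have [Ly hy] := hL y.
pose B : vec R n := fun i => q i + t * basis_vec R j i.
pose C : vec R n := fun i => B i + t * basis_vec R k i.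
pose p3 : vec R n := fun i => - (basis_vec R j i + basis_vec R k i).
have eA : (fun i => C i + t * p3 i) = q.
  by apply/funext => i; rewrite /C /B /p3; ring.
have X1 := seg hx q (basis_vec R j) t0.
have X2 := seg hx B (basis_vec R k) t0.
have X3 := seg hx C p3 t0.
have Y1 := seg hy q (basis_vec R j) t0.
have Y2 := seg hy B (basis_vec R k) t0.
have Y3 := seg hy C p3 t0.
rewrite eA in X3 Y3.
rewrite -/B in X1 Y1 X2 Y2 *.
rewrite -/C in X2 Y2 X3 Y3.
pose F1 tau := f (state q (fun _ => (basis_vec R j)) tau).
pose F2 tau := f (state B (fun _ => (basis_vec R k)) tau).
pose F3 tau := f (state C (fun _ => p3) tau).
have e1x : (fun tau => dotv (basis_vec R j) (fun j0 => f (state q (fun _ => (basis_vec R j)) tau) j0 - x j0))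
   = (fun tau => F1 tau j - 1).
  by apply/funext => tau; rewrite dot_basis /x ejj ekj addr0.
have e1j : (fun tau => dotv (basis_vec R j) (fun j0 => f (state q (fun _ => (basis_vec R j)) tau) j0 - (basis_vec R j) j0))
   = (fun tau => F1 tau j - 1).
  by apply/funext => tau; rewrite dot_basis ejj.
have e1y : (fun tau => dotv (basis_vec R j) (fun j0 => f (state q (fun _ => (basis_vec R j)) tau) j0 - y j0))
   = (fun tau => F1 tau j).
  by apply/funext => tau; rewrite dot_basis /y ekj subr0.
have e10 : (fun tau => dotv (basis_vec R j) (fun j0 => f (state q (fun _ => (basis_vec R j)) tau) j0 - 0))
   = (fun tau => F1 tau j).
  by apply/funext => tau; rewrite dot_basis subr0.
have e2x : (fun tau => dotv (basis_vec R k) (fun j0 => f (state B (fun _ => (basis_vec R k)) tau) j0 - x j0))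
   = (fun tau => F2 tau k - 1).
  by apply/funext => tau; rewrite dot_basis /x ekk ejk add0r.
have e2y : (fun tau => dotv (basis_vec R k) (fun j0 => f (state B (fun _ => (basis_vec R k)) tau) j0 - y j0))
   = (fun tau => F2 tau k - 1).
  by apply/funext => tau; rewrite dot_basis /y ekk.
pose h tau := 1 - (F3 tau j + F3 tau k).
have e3x : (fun tau => dotv p3 (fun j0 => f (state C (fun _ => p3) tau) j0 - x j0))
   = (fun tau => h tau + 1).
  apply/funext => tau; rewrite /p3 dot_p3 /x /h ejj ekj ejk ekk /F3; ring.
have e3y : (fun tau => dotv p3 (fun j0 => f (state C (fun _ => p3) tau) j0 - y j0))
   = h.
  apply/funext => tau; rewrite /p3 dot_p3 /y /h ekj ekk /F3; ring.
have h01 : forall tau, 0 <= h tau <= 1.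
  move=> tau; have [a b c] := simplex2 (hf (state C (fun _ => p3) tau)) kj.
  rewrite /h /F3; apply/andP; split; first by rewrite subr_ge0.
  by rewrite gerBl addr_ge0.
rewrite e1x in X1. rewrite e1y in Y1. rewrite e2x in X2. rewrite e2y in Y2.
rewrite e3x in X3. rewrite e3y in Y3. rewrite e1j e10.
rewrite RintC// in X3.
clearbody x B C p3 F1 F2 F3 h.
lra.
Qed.

Lemma KEY (j : 'I_n) (Lj L0 : vec R n -> R) :
  lossless_via f (basis_vec R j) Lj -> lossless_via f (fun _ => 0) L0 ->
  forall q q' : vec R n, Lj q' - L0 q' + q' j = Lj q - L0 q + q j.
Proof.
move=> hj h0 q q'.
have ejj : basis_vec R j j = 1 by rewrite /basis_vec eqxx.
pose s := q' j - q j.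
pose v : vec R n := fun i => q' i - q i - s * basis_vec R j i.
have vj : v j = 0 by rewrite /v ejj /s; ring.
have H1 : Lj (fun i => q i + 1 * v i) - L0 (fun i => q i + 1 * v i) + (q j + 1 * v j)
    = Lj q - L0 q + q j.
  rewrite (seg hj q v ler01) (seg h0 q v ler01).
  rewrite (_ : (fun tau => dotv v (fun j0 => f (state q (fun _ => v) tau) j0 - basis_vec R j j0))
     = (fun tau => dotv v (fun j0 => f (state q (fun _ => v) tau) j0 - 0))); last first.
    by apply/funext => tau; rewrite !dot_subr dot_basis_r dot_0r vj.
  rewrite vj; ring.
pose q1 : vec R n := fun i => q i + 1 * v i.
have eq' : (fun i => q1 i + s * basis_vec R j i) = q'.
  by apply/funext => i; rewrite /q1 /v; ring.
have [s0|s0] := leP 0 s.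
  have := FL hj h0 q1 s0; rewrite eq' ejj.
  rewrite -/q1 in H1.
  have -> : q1 j = q j by rewrite /q1 vj; ring.
  move=> H2; have hs : s = q' j - q j by [].
  clearbody q1 v s; lra.
have ns0 : 0 <= - s by lra.
have := FL hj h0 q' ns0.
have eq1 : (fun i => q' i + - s * basis_vec R j i) = q1.
  by apply/funext => i; rewrite /q1 /v; ring.
rewrite eq1 ejj -/q1 in H1 *.
move=> H2; have hs : s = q' j - q j by [].
clearbody q1 v s; lra.
Qed.

Lemma regret_eq (j : 'I_n) (Lj L0 : vec R n -> R) :
  lossless_via f (basis_vec R j) Lj -> lossless_via f (fun _ => 0) L0 ->
  forall q0 p, sq_int_bounded p -> forall T, 0 <= T ->
  regret_j f q0 p T j = Lj q0 - Lj (state q0 p T).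
Proof.
move=> hj h0 q0 p hp T T0.
have E := h0 q0 p hp T T0.
have K := KEY hj h0 q0 (state q0 p T).
rewrite (_ : (fun tau => dotv (p tau) (fun j0 => f (state q0 p tau) j0 - 0))
   = (fun tau => dotv (p tau) (f (state q0 p tau)))) in E; last first.
  by apply/funext => tau; rewrite dot_subr dot_0r subr0.
have Sj : state q0 p T j = q0 j + Rintegral (@lmu R) `[0, T] (fun tau => p tau j) by [].
rewrite /regret_j.
lra.
Qed.

End Main.

Unset Implicit Arguments.

Theorem proposition4p4 (R : realType) (n : nat) (f : vec R n -> vec R n)
  (hf : forall q, in_simplex (f q)) :
  lossless_dynamic f -> (constant_regret f <-> finitely_lossless_dynamic f).
Proof.
move=> hL; have [L0 h0] := hL (fun _ => 0).
split.
- move=> hreg j.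
  have [Lj hj] := hL (basis_vec R j).
  exists Lj; split => //.
  have [C hC] := hreg (fun _ => 0).
  exists (Lj (fun _ => 0) - C) => q.
  have hs : state (fun _ => 0) (fun _ => q) 1 = q.
    by rewrite state_cst ?ler01//; apply/funext => i; rewrite mul1r add0r.
  have := hC (fun _ => q) (sq_cst _) 1 ltr01 j.
  rewrite (regret_eq hf hL hj h0 (fun _ => 0) (sq_cst q) ler01) hs.
  lra.
- move=> hfl q0.
  case: (boolp.choice hfl) => Lf hLf.
  case: (boolp.choice (fun j => proj1 (hLf j))) => cf hcf.
  exists (\sum_j `|Lf j q0 - cf j|).
  move=> p hp T T0 j.
  rewrite (regret_eq hf hL (proj2 (hLf j)) h0 q0 hp (ltW T0)).
  apply: (@le_trans _ _ (Lf j q0 - cf j)).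
    by have := hcf j (state q0 p T); lra.
  apply: le_trans (ler_norm _) _.
  rewrite (bigD1 j)//= lerDl; apply: sumr_ge0 => i _; exact: normr_ge0.
Qed.
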